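(* Let $\mathbf I_F$ be a generalized Fisher information that is weakly faithful and subadditive on product-state families. Let $\{\mathcal N^\theta_{A\to B}\}_\theta$ be an environment-seizable channel family with environment state family $\{\rho^\theta_E\}_\theta$. Then $$\mathbf I^{\mathcal A}_F(\theta;\{\mathcal N^\theta_{A\to B}\}_\theta)=\mathbf I_F(\theta;\{\rho^\theta_E\}_\theta).$$
   Context: Finite-dimensional systems. A generalized Fisher information $\mathbf I_F$ assigns to each $\theta$ and family $\{\rho^\theta\}_\theta$ of density operators an extended real number with $\mathbf I_F(\theta;\{\rho^\theta_A\}_\theta)\ge\mathbf I_F(\theta;\{\mathcal K_{A\to B}(\rho^\theta_A)\}_\theta)$ for every $\theta$-independent channel $\mathcal K$; weakly faithful means it vanishes on $\theta$-independent families; subadditive on product-state families means $\mathbf I_F(\theta;\{\omega^\theta\otimes\tau^\theta\}_\theta)\le\mathbf I_F(\theta;\{\omega^\theta\}_\theta)+\mathbf I_F(\theta;\{\tau^\theta\}_\theta)$. Amortized Fisher information: $\mathbf I^{\mathcal A}_F(\theta;\{\mathcal N^\theta_{A\to B}\}_\theta):=\sup_{\{\rho^\theta_{RA}\}_\theta}[\mathbf I_F(\theta;\{\mathcal N^\theta_{A\to B}(\rho^\theta_{RA})\}_\theta)-\mathbf I_F(\theta;\{\rho^\theta_{RA}\}_\theta)]$ over state families with arbitrary reference $R$. The family is environment-parameterized with environment states $\{\rho^\theta_E\}_\theta$ if there is a $\theta$-independent channel $\mathcal M_{AE\to B}$ with $\mathcal N^\theta_{A\to B}(\omega_A)=\mathcal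 M_{AE\to B}(\omega_A\otimes\rho^\theta_E)$ for all inputs (acting as identity on any reference system); it is environment-seizable if moreover there exist a $\theta$-independent state $\zeta_{RA}$ and a $\theta$-independent channel $\mathcal D_{RB\to E}$ with $\mathcal D_{RB\to E}(\mathcal N^\theta_{A\to B}(\zeta_{RA}))=\rho^\theta_E$ for all $\theta$. *)

(* Defs.v *)
From HB Require Import structures.
From mathcomp Require Import all_boot all_order all_algebra.
From mathcomp Require Import complex mxtens.
From mathcomp Require Import classical_sets reals constructive_ereal ereal.

Set Implicit Arguments.
Unset Strict Implicit.
Unset Printing Implicit Defensive.

Import Order.TTheory GRing.Theory Num.Theory.
Local Open Scope ring_scope.

Section QuantumFisher.
Variable R : realType.
Local Notation C := (R[i]).

Definition adjmx m n (A : 'M[C]_(m, n)) : 'M[C]_(n, m) :=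
  (map_mx Num.conj A)^T.

Definition psd n (X : 'M[C]_n) : Prop :=
  forall v : 'cV[C]_n, 0 <= (adjmx v *m X *m v) 0 0.

Definition density n (X : 'M[C]_n) : Prop := psd X /\ \tr X = 1.

(* the (i,j) block of an operator on R (x) A, R of dimension k
   (Kronecker ordering of mxtens: index (i,a) |-> i * n + a) *)
Definition blockmx k n (X : 'M[C]_(k * n)) (i j : 'I_k) : 'M[C]_n :=
  \matrix_(a, b) X (mxtens_index (i, a)) (mxtens_index (j, b)).

Definition idtens k n m (Phi : 'M[C]_n -> 'M[C]_m) (X : 'M[C]_(k * n))
  : 'M[C]_(k * m) :=
  \sum_(i < k) \sum_(j < k) (delta_mx i j *t Phi (blockmx X i j)).
Arguments idtens k {n m} Phi X.

Definition is_channel n m (Phi : 'M[C]_n -> 'M[C]_m) : Prop :=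
  [/\ forall (c : C) (X Y : 'M[C]_n), Phi (c *: X + Y) = c *: Phi X + Phi Y,
      forall X : 'M[C]_n, \tr (Phi X) = \tr X
    & forall (k : nat) (X : 'M[C]_(k * n)), psd X -> psd (idtens k Phi X)].

(* a Fisher-information-like functional: to each system dimension n,
   parameter value theta and family theta' |-> rho^theta' it assigns an
   extended real *)
Definition FisherInfo := forall n : nat, R -> (R -> 'M[C]_n) -> \bar R.

Local Open Scope ereal_scope.

(* data processing under theta-independent channels: the defining property
   of a generalized Fisher information *)
Definition gen_fisher_info (IF : FisherInfo) : Prop :=
  forall n m (K : 'M[C]_n -> 'M[C]_m) (rho : R -> 'M[C]_n) (theta : R),
    is_channel K -> (forall t, density (rho t)) ->
    IF m theta (fun t => K (rho t)) <= IF n theta rho.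

Definition weakly_faithful (IF : FisherInfo) : Prop :=
  forall n (rho : 'M[C]_n) (theta : R), density rho ->
    IF n theta (fun _ => rho) = 0.

Definition subadditive_product (IF : FisherInfo) : Prop :=
  forall n m (om : R -> 'M[C]_n) (tau : R -> 'M[C]_m) (theta : R),
    (forall t, density (om t)) -> (forall t, density (tau t)) ->
    IF (n * m)%N theta (fun t => om t *t tau t)
      <= IF n theta om + IF m theta tau.

Definition amortized (IF : FisherInfo) a b
  (N : R -> 'M[C]_a -> 'M[C]_b) (theta : R) : \bar R :=
  ereal_sup [set x | exists (r : nat) (rho : R -> 'M[C]_(r * a)),
     (forall t, density (rho t)) /\
     x = IF (r * b)%N theta (fun t => idtens r (N t) (rho t))
         - IF (r * a)%N theta rho].

Definition env_parameterized a b e (N : R -> 'M[C]_a -> 'M[C]_b)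
  (rhoE : R -> 'M[C]_e) (M : 'M[C]_(a * e) -> 'M[C]_b) : Prop :=
  [/\ is_channel M,
      forall t, density (rhoE t),
      forall t (w : 'M[C]_a), density w -> N t w = M (w *t rhoE t)
    & forall (r : nat) t (w : 'M[C]_(r * a)), density w ->
        idtens r (N t) w =
        idtens r M (castmx (esym (mulnA r a e), esym (mulnA r a e))
                           (w *t rhoE t))].

Definition env_seizable a b e (N : R -> 'M[C]_a -> 'M[C]_b)
  (rhoE : R -> 'M[C]_e) : Prop :=
  (exists M : 'M[C]_(a * e) -> 'M[C]_b, env_parameterized N rhoE M) /\
  exists (r : nat) (zeta : 'M[C]_(r * a)) (D : 'M[C]_(r * b) -> 'M[C]_e),
    [/\ density zeta, is_channel D
      & forall t, D (idtens r (N t) zeta) = rhoE t].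

End QuantumFisher.

(* Main.v *)
Require Import Defs.
From HB Require Import structures.
From mathcomp Require Import all_boot all_order all_algebra.
From mathcomp Require Import complex mxtens spectral sesquilinear.
From mathcomp Require Import classical_sets reals constructive_ereal ereal.
From mathcomp Require Import ring.
From Stdlib Require Import FunctionalExtensionality.
Set Implicit Arguments.
Unset Strict Implicit.
Unset Printing Implicit Defensive.
Import Order.TTheory GRing.Theory Num.Theory.
Local Open Scope ring_scope.
Local Open Scope ereal_scope.
Local Open Scope ring_scope.

Section H.
Variable R : realType.
Local Notation C := (R[i]).
Local Notation idt k Phi := (@idtens _ k _ _ Phi).

Lemma sum_split k m (F : 'I_(k * m) -> C) :
  \sum_p F p = \sum_(i < k) \sum_(a < m) F (mxtens_index (i, a)).
Proof.
rewrite pair_big /= (reindex (@mxtens_index k m)) /=; first by apply: eq_bigr => -[].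
by exists (@mxtens_unindex k m) => x _; rewrite (mxtens_indexK, mxtens_unindexK).
Qed.

Lemma idtensE k n m (Phi : 'M[C]_n -> 'M[C]_m) X i a j b :
  idt k Phi X (mxtens_index (i, a)) (mxtens_index (j, b)) =
  Phi (blockmx X i j) a b.
Proof.
rewrite /idtens summxE (bigD1 i) //= summxE (bigD1 j) //= tensmxE mxE !eqxx mul1r.
rewrite big1 ?addr0; last first.
  by move=> j' /negbTE nj; rewrite tensmxE mxE [j == j']eq_sym nj andbF mul0r.
rewrite big1 ?addr0 // => i' /negbTE ni; rewrite summxE big1 // => j' _.
by rewrite tensmxE mxE [i == i']eq_sym ni mul0r.
Qed.

Lemma tr_split k m (A : 'M[C]_(k * m)) :
  \tr A = \sum_i \sum_a A (mxtens_index (i, a)) (mxtens_index (i, a)).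
Proof. by rewrite /mxtrace sum_split. Qed.

Lemma tr_idtens k n m (Phi : 'M[C]_n -> 'M[C]_m) X :
  \tr (idt k Phi X) = \sum_i \tr (Phi (blockmx X i i)).
Proof. by rewrite tr_split; apply: eq_bigr => i _; apply: eq_bigr => a _; rewrite idtensE. Qed.

Lemma tr_block k n (X : 'M[C]_(k * n)) : \tr X = \sum_i \tr (blockmx X i i).
Proof. by rewrite tr_split; apply: eq_bigr => i _; apply: eq_bigr => a _; rewrite mxE. Qed.

Lemma psd_cast n m (E : n = m) (A : 'M[C]_n) : psd A -> psd (castmx (E, E) A).
Proof. by case: m / E; rewrite castmx_id. Qed.

Lemma tr_cast n m (E : n = m) (A : 'M[C]_n) : \tr (castmx (E, E) A) = \tr A.
Proof. by case: m / E; rewrite castmx_id. Qed.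

Lemma tr_tens n m (A : 'M[C]_n) (B : 'M[C]_m) : \tr (A *t B) = \tr A * \tr B.
Proof.
rewrite tr_split /mxtrace mulr_suml; apply: eq_bigr => i _.
by rewrite mulr_sumr; apply: eq_bigr => a _; rewrite tensmxE.
Qed.

Lemma idx_assoc k r m (i : 'I_k) (j : 'I_r) (c : 'I_m) E :
  cast_ord E (mxtens_index (i, mxtens_index (j, c))) =
  mxtens_index (mxtens_index (i, j), c).
Proof. apply: val_inj => /=; rewrite mulnDl -mulnA addnA //. Qed.

Lemma idx_assoc' k r m (i : 'I_k) (j : 'I_r) (c : 'I_m) E :
  cast_ord E (mxtens_index (mxtens_index (i, j), c)) =
  mxtens_index (i, mxtens_index (j, c)).
Proof. apply: val_inj => /=; rewrite mulnDl -mulnA addnA //. Qed.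

Lemma idtens_assoc k r n m (Phi : 'M[C]_n -> 'M[C]_m) (X : 'M[C]_(k * (r * n))) :
  idt k (idt r Phi) X =
  castmx (esym (mulnA k r m), esym (mulnA k r m))
    (idt (k * r) Phi (castmx (mulnA k r n, mulnA k r n) X)).
Proof.
apply/matrixP => p q.
case: (mxtens_indexP p) => i p'; case: (mxtens_indexP p') => j c.
case: (mxtens_indexP q) => i' q'; case: (mxtens_indexP q') => j' c'.
rewrite castmxE /= !idx_assoc.
rewrite (idtensE (idt r Phi)) idtensE idtensE.
congr (Phi _ c c').
by apply/matrixP => x y; rewrite !mxE castmxE /= !idx_assoc'.
Qed.


Lemma blockmx_lin k n (c : C) (X Y : 'M[C]_(k * n)) i j :
  blockmx (c *: X + Y) i j = c *: blockmx X i j + blockmx Y i j.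
Proof. by apply/matrixP => x y; rewrite !mxE. Qed.

Lemma channel_idtens r n m (Phi : 'M[C]_n -> 'M[C]_m) :
  is_channel Phi -> is_channel (idt r Phi).
Proof.
case=> Hl Ht Hc; split.
- move=> c X Y; apply/matrixP => p q.
  case: (mxtens_indexP p) => i a; case: (mxtens_indexP q) => j b.
  by rewrite idtensE mxE [in RHS]mxE !idtensE blockmx_lin Hl !mxE.
- by move=> X; rewrite tr_idtens tr_block; apply: eq_bigr => i _; rewrite Ht.
- move=> k X HX; rewrite idtens_assoc; apply: psd_cast; apply: Hc.
  exact: psd_cast.
Qed.

Lemma quadE n (X : 'M[C]_n) (v : 'cV[C]_n) :
  (adjmx v *m X *m v) 0 0 = \sum_i \sum_j (v i 0)^* * X i j * v j 0.
Proof.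
rewrite mxE; under eq_bigr do rewrite mxE mulr_suml.
rewrite exchange_big; apply: eq_bigr => i _; apply: eq_bigr => j _.
by rewrite !mxE.
Qed.


Lemma adjmxD m n (x y : 'M[C]_(m, n)) : adjmx (x + y) = adjmx x + adjmx y.
Proof. by apply/matrixP => a b; rewrite !mxE rmorphD. Qed.

Lemma adjmxZ m n (c : C) (x : 'M[C]_(m, n)) : adjmx (c *: x) = c^* *: adjmx x.
Proof. by apply/matrixP => a b; rewrite !mxE rmorphM. Qed.

Lemma adjmx_delta n (i : 'I_n) : adjmx (delta_mx i 0 : 'cV[C]_n) = delta_mx 0 i.
Proof. by apply/matrixP => a b; rewrite !mxE rmorph_nat andbC. Qed.

Lemma cD (a b : C) : (a + b)^* = a^* + b^*. Proof. exact: rmorphD. Qed.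
Lemma cM (a b : C) : (a * b)^* = a^* * b^*. Proof. exact: rmorphM. Qed.
Lemma cB (a b : C) : (a - b)^* = a^* - b^*. Proof. exact: rmorphB. Qed.
Lemma cN (a : C) : (- a)^* = - a^*. Proof. exact: rmorphN. Qed.
Lemma c1 : (1 : C)^* = 1. Proof. exact: rmorph1. Qed.
Lemma cK (a : C) : a^*^* = a. Proof. exact: conjCK. Qed.

Lemma psd_herm n (A : 'M[C]_n) : psd A -> forall i j, (A j i)^* = A i j.
Proof.
move=> HA i j.
pose s (x y : 'cV[C]_n) := (adjmx x *m A *m y) 0 0.
have sE x y c : s (x + c *: y) (x + c *: y) =
    s x x + c^* * c * s y y + c * s x y + c^* * s y x.
  rewrite /s adjmxD adjmxZ !mulmxDl !mulmxDr -!scalemxAl -!scalemxAr !mxE.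
  ring.
have re x : (s x x)^* = s x x by apply/CrealP/ger0_real/HA.
have sij : s (delta_mx i 0) (delta_mx j 0) = A i j.
  by rewrite /s adjmx_delta -mulmxA -colE -rowE !mxE.
have sji : s (delta_mx j 0) (delta_mx i 0) = A j i.
  by rewrite /s adjmx_delta -mulmxA -colE -rowE !mxE.
set x := delta_mx i 0 : 'cV[C]_n; set y := delta_mx j 0 : 'cV[C]_n.
have h1 := re (x + 1 *: y); rewrite sE c1 !mul1r !cD re [(s y y)^*]re in h1.
have h2 := re (x + 'i *: y); rewrite sE conjCi !cD !cM conjCi re [(s y y)^*]re in h2.
rewrite -sij -sji.
set u := s x y in h1 h2 *; set w := s y x in h1 h2 *.
move: h1 h2; rewrite !cN conjCi opprK.
move/eqP; rewrite -subr_eq0 => /eqP e1; move/eqP; rewrite -subr_eq0 => /eqP e2.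
have : 'i * ((w^* - u) *+ 2) = 0.
  rewrite -[RHS](addr0 0); rewrite -{1}(mulr0 'i) -{1}e1 -{1}e2; ring.
move/eqP; rewrite mulf_eq0 (negbTE (neq0Ci _)) /= mulrn_eq0 /= subr_eq0.
by move/eqP.
Qed.



Lemma adjmx_mul m n p (X : 'M[C]_(m, n)) (Y : 'M[C]_(n, p)) :
  adjmx (X *m Y) = adjmx Y *m adjmx X.
Proof. by rewrite /adjmx map_mxM trmx_mul. Qed.

Lemma adjmx_tc n (P : 'M[C]_n) : adjmx ((P ^t*)%sesqui) = P.
Proof. by apply/matrixP => a b; rewrite !mxE cK. Qed.

Lemma psd_decomp n (A : 'M[C]_n) : psd A ->
  exists (P : 'M[C]_n) (d : 'rV[C]_n), (forall l, 0 <= d 0 l) /\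
    forall i j, A i j = \sum_l (P l i)^* * d 0 l * P l j.
Proof.
move=> HA.
have At : (A ^t*)%sesqui = A.
  by apply/matrixP => a b; rewrite !mxE psd_herm.
have Anorm : A \is normalmx by apply/normalmxP; rewrite At.
have /orthomx_spectralP Adec := Anorm.
set P := spectralmx A in Adec; set d := spectral_diag A in Adec.
have PU : P \is unitarymx by exact: spectral_unitarymx.
rewrite invmx_unitary // in Adec.
have PP : P *m (P ^t*)%sesqui = 1%:M by apply/unitarymxP.
exists P, d; split.
  move=> l; have := HA ((P ^t*)%sesqui *m delta_mx l 0).
  rewrite adjmx_mul adjmx_tc adjmx_delta Adec !mulmxA -[delta_mx 0 l *m P *m _]mulmxA PP mulmx1.
  rewrite -[_ *m P *m _]mulmxA PP mulmx1 -mulmxA -colE -rowE !mxE eqxx mulr1n.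
  by [].
move=> i j; rewrite Adec mxE; apply: eq_bigr => l _; rewrite mul_mx_diag !mxE.
by [].
Qed.


Lemma reorder5 k m (F : 'I_k -> 'I_m -> 'I_k -> 'I_m -> 'I_k -> C) :
  \sum_i \sum_a \sum_j \sum_b \sum_l F i a j b l =
  \sum_l \sum_a \sum_b \sum_i \sum_j F i a j b l.
Proof.
transitivity (\sum_i \sum_a \sum_j \sum_l \sum_b F i a j b l).
  by apply: eq_bigr => i _; apply: eq_bigr => a _; apply: eq_bigr => j _; rewrite exchange_big.
transitivity (\sum_i \sum_a \sum_l \sum_j \sum_b F i a j b l).
  by apply: eq_bigr => i _; apply: eq_bigr => a _; rewrite exchange_big.
transitivity (\sum_i \sum_l \sum_a \sum_j \sum_b F i a j b l).
  by apply: eq_bigr => i _; rewrite exchange_big.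
rewrite exchange_big; apply: eq_bigr => l _.
rewrite exchange_big; apply: eq_bigr => a _.
transitivity (\sum_i \sum_b \sum_j F i a j b l).
  by apply: eq_bigr => i _; rewrite exchange_big.
by rewrite exchange_big.
Qed.

Lemma cS I (r : seq I) (P : pred I) (F : I -> C) :
  (\sum_(i <- r | P i) F i)^* = \sum_(i <- r | P i) (F i)^*.
Proof. exact: rmorph_sum. Qed.

Lemma psd_tens k m (A : 'M[C]_k) (B : 'M[C]_m) : psd A -> psd B -> psd (A *t B).
Proof.
move=> HA HB v.
have [P [d [d0 Ad]]] := psd_decomp HA.
pose w l : 'cV[C]_m := \col_a (\sum_j P l j * v (mxtens_index (j, a)) 0).
have key : (adjmx v *m (A *t B) *m v) 0 0 =
    \sum_l d 0 l * (adjmx (w l) *m B *m w l) 0 0.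
  rewrite quadE sum_split.
  transitivity (\sum_i \sum_a \sum_j \sum_b \sum_l
     (v (mxtens_index (i, a)) 0)^* * ((P l i)^* * d 0 l * P l j * B a b) *
       v (mxtens_index (j, b)) 0).
    apply: eq_bigr => i _; apply: eq_bigr => a _; rewrite sum_split.
    apply: eq_bigr => j _; apply: eq_bigr => b _.
    by rewrite tensmxE Ad !mulr_suml mulr_sumr mulr_suml.
  rewrite reorder5; apply: eq_bigr => l _; rewrite quadE mulr_sumr.
  apply: eq_bigr => a _; rewrite mulr_sumr; apply: eq_bigr => b _.
  rewrite !mxE cS !mulr_suml mulr_sumr; apply: eq_bigr => i _.
  rewrite !mulr_sumr; apply: eq_bigr => j _.
  by rewrite cM; ring.
rewrite key; apply: sumr_ge0 => l _; apply: mulr_ge0 => //; exact: HB.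
Qed.


Lemma IF_cast (IF : FisherInfo R) n m (E : n = m) (f : R -> 'M[C]_n) th :
  IF m th (fun t => castmx (E, E) (f t)) = IF n th f.
Proof.
by case: m / E; congr (IF _ _ _).
Qed.

Lemma ereal_sub_le (x y z : \bar R) : (x <= y + z -> x - y <= z)%E.
Proof.
move: x y z => [x| |] [y| |] [z| |] //=; rewrite ?lee_fin.
- by move=> h; rewrite lerBlDr addrC.
all: move=> h; rewrite ?leey ?addeNy ?addNye ?leNye //.
Qed.

Lemma density_tens n m (A : 'M[C]_n) (B : 'M[C]_m) :
  density A -> density B -> density (A *t B).
Proof.
move=> [pA tA] [pB tB]; split; first exact: psd_tens.
by rewrite tr_tens tA tB mulr1.
Qed.

End H.

Theorem mainTheorem19 (R : realType) (IF : FisherInfo R) (a b e : nat)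
  (N : R -> 'M[R[i]]_a -> 'M[R[i]]_b) (rhoE : R -> 'M[R[i]]_e) (theta : R) :
  gen_fisher_info IF -> weakly_faithful IF -> subadditive_product IF ->
  (forall t, is_channel (N t)) -> env_seizable N rhoE ->
  amortized IF N theta = IF e theta rhoE.
Proof.
move=> Hgen Hwf Hsub Hch [[M [HMch HrhoE HN1 HNr]] [r0 [zeta [D [Hz HD HDz]]]]].
rewrite /amortized; apply: le_anti; apply/andP; split.
- apply: ge_ereal_sup => x [r [rho [Hrho ->]]].
  apply: ereal_sub_le.
  set E := esym (mulnA r a e).
  have -> : (fun t => @idtens _ r _ _ (N t) (rho t)) =
      (fun t => @idtens _ r _ _ M (castmx (E, E) (rho t *t rhoE t))).
    by apply: functional_extensionality => t; rewrite HNr.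
  apply: le_trans; first apply: (Hgen _ _ (@idtens _ r _ _ M)
     (fun t => castmx (E, E) (rho t *t rhoE t))).
  + exact: channel_idtens.
  + move=> t; have [p1 t1] := density_tens (Hrho t) (HrhoE t).
    by split; [apply: psd_cast | rewrite tr_cast].
  rewrite IF_cast; exact: Hsub.
- apply: le_trans (_ : IF _ theta (fun t => @idtens _ r0 _ _ (N t) zeta)
     - IF _ theta (fun _ => zeta) <= _)%E; last first.
    by apply: ereal_sup_ubound; exists r0, (fun _ => zeta); split.
  rewrite Hwf // sube0.
  have -> : rhoE = (fun t => D (@idtens _ r0 _ _ (N t) zeta)).
    by apply: functional_extensionality => t; rewrite HDz.
  apply: Hgen => //.
  move=> t; have [_ _ Hc] := Hch t; have [_ ht _] := channel_idtens r0 (Hch t).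
  case: Hz => pz tz; split; first exact: Hc.
  by rewrite ht.
Qed.
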